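(* For every $\alpha>0$, with the initialization described in the context, $\mathbf{V}(0)+\mathbf{G}(0)=\mathbf{H}(0)$. Consequently, for $\alpha=1$, under gradient flow the predictions satisfy at time $0$ $$\frac{d\mathbf{f}}{dt}=-\boldsymbol{\Lambda}(0)(\mathbf{f}(0)-\mathbf{y})=-\mathbf{H}(0)(\mathbf{f}(0)-\mathbf{y}).$$
   Context: Data $(\mathbf{x}_i,y_i)\in\mathbb{R}^d\times\mathbb{R}$, $i=1,\dots,n$. Network $f(\mathbf{x})=\frac{1}{\sqrt m}\sum_{k=1}^m c_k\sigma(g_k\mathbf{v}_k^\top\mathbf{x}/\|\mathbf{v}_k\|_2)$, $\sigma(s)=\max\{s,0\}$; initialization: independently $\mathbf{v}_k(0)\sim N(0,\alpha^2\mathbf{I})$, $c_k$ uniform on $\{-1,1\}$, $g_k(0)=\|\mathbf{v}_k(0)\|_2/\alpha$. Loss $L=\frac12\sum_i(f(\mathbf{x}_i)-y_i)^2$; gradient flow $\frac{d\mathbf{v}_k}{dt}=-\partial L/\partial\mathbf{v}_k$, $\frac{dg_k}{dt}=-\partial L/\partial g_k$ with $c_k$ fixed; $\mathbf{f}(t)$ the vector of predictions. Notation: $\mathbf{x}^{\mathbf{u}}=\mathbf{u}\mathbf{u}^\top\mathbf{x}/\|\mathbf{u}\|_2^2$, $\mathbf{x}^{\mathbf{u}^\perp}=\mathbf{x}-\mathbf{x}^{\mathbf{u}}$, $\mathbb{1}_{ik}(t)=\mathbb{1}\{\mathbf{v}_k(t)^\top\mathbf{x}_i\ge0\}$. $\mathbf{V}_{ij}(t)=\frac1m\sum_k\big(\frac{\alpha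 c_kg_k(t)}{\|\mathbf{v}_k(t)\|_2}\big)^2\langle\mathbf{x}_i^{\mathbf{v}_k(t)^\perp},\mathbf{x}_j^{\mathbf{v}_k(t)^\perp}\rangle\mathbb{1}_{ik}(t)\mathbb{1}_{jk}(t)$, $\mathbf{G}_{ij}(t)=\frac1m\sum_k\sigma(\mathbf{v}_k(t)^\top\mathbf{x}_i)\sigma(\mathbf{v}_k(t)^\top\mathbf{x}_j)/\|\mathbf{v}_k(t)\|_2^2$, $\boldsymbol{\Lambda}(t)=\mathbf{V}(t)/\alpha^2+\mathbf{G}(t)$, and the (un-normalized) neural tangent kernel $\mathbf{H}_{ij}(0)=\frac1m\sum_k\mathbf{x}_i^\top\mathbf{x}_j\mathbb{1}_{ik}(0)\mathbb{1}_{jk}(0)$. *)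

(* Defs.v *)
From HB Require Import structures.
From mathcomp Require Import all_boot all_order all_algebra.
From mathcomp Require Import all_classical all_reals topology normedtype derive.
Set Implicit Arguments. Unset Strict Implicit. Unset Printing Implicit Defensive.
Import Order.TTheory GRing.Theory Num.Theory.
Import numFieldNormedType.Exports.
Local Open Scope ring_scope.

Section Defs.
Variable R : realType.
Variables (m n d : nat).

Definition dot (u w : 'rV[R]_d) : R := \sum_(l < d) u 0 l * w 0 l.
Definition norm2 (u : 'rV[R]_d) : R := Num.sqrt (dot u u).

Definition proj (u x : 'rV[R]_d) : 'rV[R]_d := (dot u x / norm2 u ^+ 2) *: u.
Definition perp (u x : 'rV[R]_d) : 'rV[R]_d := x - proj u x.

Definition relu (s : R) : R := Num.max s 0.

Definition ind (u x : 'rV[R]_d) : R := if 0 <= dot u x then 1 else 0.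

Definition net (c : 'I_m -> R) (v : 'I_m -> 'rV[R]_d) (g : 'I_m -> R)
  (x : 'rV[R]_d) : R :=
  (Num.sqrt (m%:R))^-1 *
    \sum_(k < m) c k * relu (g k * dot (v k) x / norm2 (v k)).

Definition loss (X : 'I_n -> 'rV[R]_d) (y : 'I_n -> R) (c : 'I_m -> R)
  (v : 'I_m -> 'rV[R]_d) (g : 'I_m -> R) : R :=
  2^-1 * \sum_(i < n) (net c v g (X i) - y i) ^+ 2.

Definition vshift (v : 'I_m -> 'rV[R]_d) (k : 'I_m) (l : 'I_d) (s : R)
  : 'I_m -> 'rV[R]_d :=
  fun k' => if k' == k then v k' + \row_(j < d) (if j == l then s else 0)
            else v k'.
Definition gshift (g : 'I_m -> R) (k : 'I_m) (s : R) : 'I_m -> R :=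
  fun k' => if k' == k then g k' + s else g k'.

Definition dLdv X y c v g (k : 'I_m) (l : 'I_d) : R :=
  derive1 (fun s => loss X y c (vshift v k l s) g) 0.
Definition dLdg X y c v g (k : 'I_m) : R :=
  derive1 (fun s => loss X y c v (gshift g k s)) 0.

Definition Vmx (alpha : R) (X : 'I_n -> 'rV[R]_d) (c : 'I_m -> R)
  (v : 'I_m -> 'rV[R]_d) (g : 'I_m -> R) : 'M[R]_n :=
  \matrix_(i < n, j < n) ((m%:R)^-1 *
    \sum_(k < m) (alpha * c k * g k / norm2 (v k)) ^+ 2 *
       dot (perp (v k) (X i)) (perp (v k) (X j)) *
       ind (v k) (X i) * ind (v k) (X j)).

Definition Gmx (X : 'I_n -> 'rV[R]_d) (v : 'I_m -> 'rV[R]_d) : 'M[R]_n :=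
  \matrix_(i < n, j < n) ((m%:R)^-1 *
    \sum_(k < m) relu (dot (v k) (X i)) * relu (dot (v k) (X j))
                 / norm2 (v k) ^+ 2).

Definition Lambda alpha X c v g : 'M[R]_n :=
  (alpha ^+ 2)^-1 *: Vmx alpha X c v g + Gmx X v.

Definition Hmx (X : 'I_n -> 'rV[R]_d) (v : 'I_m -> 'rV[R]_d) : 'M[R]_n :=
  \matrix_(i < n, j < n) ((m%:R)^-1 *
    \sum_(k < m) dot (X i) (X j) * ind (v k) (X i) * ind (v k) (X j)).

End Defs.

(* Main.v *)
Require Import Defs.
From HB Require Import structures.
From mathcomp Require Import all_boot all_order all_algebra.
From mathcomp Require Import all_classical all_reals topology normedtype derive realfun.
From mathcomp Require Import ring lra.
Import Order.TTheory GRing.Theory Num.Theory.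
Import numFieldNormedType.Exports.
Local Open Scope ring_scope. Local Open Scope classical_set_scope.

Section S.
Variable R : realType.

Lemma is_derive_cont (f : R -> R) (df : R) : is_derive (0:R) 1 f df -> f @ (0:R) --> f 0.
Proof.
move=> [h _]. exact/differentiable_continuous/derivable1_diffP.
Qed.

Lemma relu_derive (f : R -> R) (df : R) : is_derive (0:R) 1 f df -> f 0 != 0 ->
  is_derive (0:R) 1 (fun t => relu (f t)) ((if 0 < f 0 then 1 else 0) * df).
Proof.
move=> hf hn; have cf := is_derive_cont _ _ hf.
have [pos|neg] := ltP 0 (f 0).
  rewrite mul1r; eapply near_eq_is_derive; last exact: hf.
  have ht := @cvgr_gt R R (nbhs (0:R)) _ f (f 0) cf 0 pos.
  near=> t; rewrite /relu max_l //; apply: ltW; near: t; exact: ht.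
have neg' : f 0 < 0 by rewrite lt_neqAle hn neg.
rewrite mul0r; eapply near_eq_is_derive; last exact: (is_derive_cst (0:R) (0:R) 1).
have ht := @cvgr_lt R R (nbhs (0:R)) _ f (f 0) cf 0 neg'.
near=> t; rewrite /relu max_r //; apply: ltW; near: t; exact: ht.
Unshelve. all: by end_near. Qed.

Lemma dM (f g : R -> R) a b d : is_derive (0:R) 1 f a -> is_derive (0:R) 1 g b ->
  d = f 0 * b + g 0 * a -> is_derive (0:R) 1 (fun t => f t * g t) d.
Proof.
move=> hf hg ->; have := is_deriveM hf hg.
by have -> : (f * g) = (fun t => f t * g t) by apply/funext.
Qed.

Lemma dD (f g : R -> R) a b d : is_derive (0:R) 1 f a -> is_derive (0:R) 1 g b ->
  d = a + b -> is_derive (0:R) 1 (fun t => f t + g t) d.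
Proof.
move=> hf hg ->; have := is_deriveD hf hg.
by have -> : (f + g) = (fun t => f t + g t) by apply/funext.
Qed.

Lemma dC (k : R) d : d = 0 -> is_derive (0:R) 1 (fun _ => k) d.
Proof. by move=> ->; exact: is_derive_cst. Qed.

Lemma dId d : d = 1 -> is_derive (0:R) 1 (fun t : R => t) d.
Proof. by move=> ->; exact: is_derive_id. Qed.

Lemma dS n (h : 'I_n -> R -> R) (dh : 'I_n -> R) d :
  (forall i, is_derive (0:R) 1 (h i) (dh i)) -> d = \sum_i dh i ->
  is_derive (0:R) 1 (fun t => \sum_i h i t) d.
Proof.
move=> H ->; have := is_derive_sum H.
by rewrite fct_sumE.
Qed.

Lemma dV (f : R -> R) a d : is_derive (0:R) 1 f a -> f 0 != 0 ->
  d = - (f 0) ^- 2 * a -> is_derive (0:R) 1 (fun t => (f t)^-1) d.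
Proof. by move=> hf hn ->; exact: is_deriveV. Qed.

Lemma dSqrt (f : R -> R) a d : is_derive (0:R) 1 f a -> 0 < f 0 ->
  d = (2 * Num.sqrt (f 0))^-1 * a -> is_derive (0:R) 1 (fun t => Num.sqrt (f t)) d.
Proof.
move=> hf hp ->.
have := is_derive1_comp (is_derive1_sqrt hp) hf.
by [].
Qed.

Variable d : nat.
Implicit Types u w x y : 'rV[R]_d.

Lemma dot_ge0 u : 0 <= dot u u.
Proof. by rewrite /dot; apply: sumr_ge0 => l _; rewrite -expr2 sqr_ge0. Qed.

Lemma dot_gt0 u : u != 0 -> 0 < dot u u.
Proof.
move=> hu; rewrite lt_def dot_ge0 andbT; apply: contra hu => /eqP H.
apply/eqP/rowP => l; rewrite mxE.
have h0 : forall k : 'I_d, true -> 0 <= u 0 k * u 0 k by move=> k _; rewrite -expr2 sqr_ge0.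
have := @psumr_eq0P _ _ _ (fun k => u 0 k * u 0 k) h0 H l isT.
by move=> /eqP; rewrite mulf_eq0 orbb => /eqP ->.
Qed.

Lemma norm2_sq u : norm2 u ^+ 2 = dot u u.
Proof. by rewrite /norm2 sqr_sqrtr // dot_ge0. Qed.

Lemma norm2_gt0 u : u != 0 -> 0 < norm2 u.
Proof. by move=> h; rewrite /norm2 sqrtr_gt0 dot_gt0. Qed.

Lemma dotC u w : dot u w = dot w u.
Proof. by rewrite /dot; apply: eq_bigr => l _; rewrite mulrC. Qed.

Lemma dot_subZr w x a u : dot w (x - a *: u) = dot w x - a * dot w u.
Proof.
rewrite /dot mulr_sumr -sumrB; apply: eq_bigr => l _; rewrite !mxE; ring.
Qed.

Lemma dot_subZl w x a u : dot (x - a *: u) w = dot x w - a * dot u w.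
Proof. by rewrite dotC dot_subZr dotC (dotC w u). Qed.

Lemma dot_perp x y u : u != 0 ->
  dot (perp u x) (perp u y) = dot x y - dot u x * dot u y / dot u u.
Proof.
move=> hu; have hp := dot_gt0 _ hu.
rewrite /perp /Defs.proj dot_subZl !dot_subZr norm2_sq (dotC x u) (dotC u y).
by field; rewrite gt_eqF.
Qed.

Lemma relu_ind u x : relu (dot u x) = ind u x * dot u x.
Proof.
by rewrite /relu /ind; case: (leP 0 (dot u x)) => h; rewrite ?mul1r ?mul0r.
Qed.

Lemma sum_perp (P : 'I_d -> R) u x :
  \sum_l P l * perp u x 0 l =
  \sum_l P l * x 0 l - dot u x / norm2 u ^+ 2 * \sum_l u 0 l * P l.
Proof.
rewrite mulr_sumr -sumrB; apply: eq_bigr => l _; rewrite /perp /Defs.proj !mxE; ring.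
Qed.

Lemma kterm (p : R -> 'rV[R]_d) (q : R -> R) (P : 'I_d -> R) (Q : R) x :
  (forall l, is_derive (0:R) 1 (fun t => p t 0 l) (P l)) -> is_derive (0:R) 1 q Q ->
  p 0 != 0 -> q 0 = norm2 (p 0) -> dot (p 0) x != 0 ->
  is_derive (0:R) 1 (fun t => relu (q t * dot (p t) x / norm2 (p t)))
   (ind (p 0) x * (Q * dot (p 0) x / norm2 (p 0) +
      q 0 / norm2 (p 0) * \sum_l P l * perp (p 0) x 0 l)).
Proof.
move=> hP hq hp0 hq0 hdx0.
have hN0 := norm2_gt0 _ hp0.
have hdx : is_derive (0:R) 1 (fun t => dot (p t) x) (\sum_l P l * x 0 l).
  rewrite /dot; apply: (@dS _ _ (fun l => P l * x 0 l)) => // l.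
  by apply: dM; do ?[exact: hP|exact: is_derive_cst]; ring.
have hD : is_derive (0:R) 1 (fun t => dot (p t) (p t))
    (2 * \sum_l p 0 0 l * P l).
  rewrite /dot; apply: (@dS _ _ (fun l => 2 * (p 0 0 l * P l))).
    by move=> l; apply: dM; do ?[exact: hP|exact: is_derive_cst]; ring.
  by rewrite mulr_sumr.
have hN : is_derive (0:R) 1 (fun t => norm2 (p t))
    ((\sum_l p 0 0 l * P l) / norm2 (p 0)).
  apply: dSqrt; first exact: dot_gt0.
  rewrite [X in (2 * X)^-1](_ : _ = norm2 (p 0)) //; field; exact: lt0r_neq0.
have hNi : is_derive (0:R) 1 (fun t => (norm2 (p t))^-1)
    (- (norm2 (p 0)) ^- 2 * ((\sum_l p 0 0 l * P l) / norm2 (p 0))).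
  by apply: dV => //; exact: lt0r_neq0.
have hs := dM _ _ _ _ _ (dM _ _ _ _ _ hq hdx erefl) hNi erefl.
have hs0 : q 0 * dot (p 0) x / norm2 (p 0) = dot (p 0) x.
  by rewrite hq0; field; exact: lt0r_neq0.
have := relu_derive _ _ hs; rewrite hs0 => /(_ hdx0) H.
apply: is_derive_eq H _.
rewrite sum_perp /ind; have -> : (0 < dot (p 0) x) = (0 <= dot (p 0) x).
  by rewrite lt_def hdx0.
case: ifP => _; rewrite ?mul0r ?mul1r //.
rewrite norm2_sq hq0 -norm2_sq; field; exact: lt0r_neq0.
Qed.

Lemma dot0r u : dot u 0 = 0.
Proof. by rewrite /dot big1 // => l _; rewrite mxE mulr0. Qed.

Lemma perp0 u l : perp u 0 0 l = 0.
Proof. by rewrite /perp /Defs.proj dot0r mul0r scale0r subr0 mxE. Qed.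

Variable m : nat.

Definition Dv (v0 : 'I_m -> 'rV[R]_d) (g0 : 'I_m -> R) (c : 'I_m -> R) k l x :=
  (Num.sqrt m%:R)^-1 * c k * ind (v0 k) x * (g0 k / norm2 (v0 k)) * perp (v0 k) x 0 l.
Definition Dg (v0 : 'I_m -> 'rV[R]_d) (c : 'I_m -> R) k x :=
  (Num.sqrt m%:R)^-1 * c k * ind (v0 k) x * (dot (v0 k) x / norm2 (v0 k)).

Lemma net_derive (c : 'I_m -> R) (p : R -> 'I_m -> 'rV[R]_d) (q : R -> 'I_m -> R)
  (P : 'I_m -> 'I_d -> R) (Q : 'I_m -> R) x :
  (forall k l, is_derive (0:R) 1 (fun t => p t k 0 l) (P k l)) ->
  (forall k, is_derive (0:R) 1 (fun t => q t k) (Q k)) ->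
  (forall k, p 0 k != 0) -> (forall k, q 0 k = norm2 (p 0 k)) ->
  (x = 0 \/ forall k, dot (p 0 k) x != 0) ->
  is_derive (0:R) 1 (fun t => net c (p t) (q t) x)
    (\sum_k (\sum_l Dv (p 0) (q 0) c k l x * P k l + Dg (p 0) c k x * Q k)).
Proof.
move=> hP hQ hp0 hq0 [->|hx].
  have -> : (fun t => net c (p t) (q t) 0) = (fun _ => 0).
    apply/funext => t; rewrite /net big1 ?mulr0 // => k _.
    by rewrite dot0r mulr0 mul0r /relu maxxx mulr0.
  apply: dC; rewrite big1 // => k _.
  rewrite big1 ?add0r; first by rewrite /Dg dot0r mul0r mulr0 mul0r.
  by move=> l _; rewrite /Dv perp0 !mulr0 mul0r.
rewrite /net; apply: dM; rewrite ?mulr0 ?addr0.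
  apply: (@dS _ _ (fun k => c k * (ind (p 0 k) x * (Q k * dot (p 0 k) x / norm2 (p 0 k) +
      q 0 k / norm2 (p 0 k) * \sum_l P k l * perp (p 0 k) x 0 l)))); last by [].
  move=> k; apply: dM; last by rewrite mulr0 addr0.
  exact: (kterm (fun t => p t k) (fun t => q t k) (P k) (Q k) x (hP k) (hQ k) (hp0 k) (hq0 k) (hx k)).
rewrite ?mulr0 ?addr0 mulr_sumr; apply: eq_bigr => k _.
rewrite (_ : \sum_l Dv (p 0) (q 0) c k l x * P k l =
  (Num.sqrt m%:R)^-1 * c k * ind (p 0 k) x * (q 0 k / norm2 (p 0 k)) *
   \sum_l P k l * perp (p 0 k) x 0 l).
  rewrite /Dg; ring.
by rewrite mulr_sumr; apply: eq_bigr => l _; rewrite /Dv; ring.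
Qed.

Lemma sum_delta N (F : 'I_N -> R) j : \sum_(i < N) F i * (i == j)%:R = F j.
Proof.
rewrite (bigD1 j) //= eqxx mulr1 big1 ?addr0 // => i /negbTE ->; exact: mulr0.
Qed.

Lemma dX2 (f : R -> R) a dd : is_derive (0:R) 1 f a -> dd = 2 * f 0 * a ->
  is_derive (0:R) 1 (fun t => f t ^+ 2) dd.
Proof.
move=> hf ->; apply: (dM _ _ _ _ _ hf hf); ring.
Qed.

Lemma vshift0 (v0 : 'I_m -> 'rV[R]_d) k l : vshift v0 k l 0 = v0.
Proof.
apply/funext => k'; rewrite /vshift; case: eqP => // ->.
by apply/rowP => j; rewrite !mxE; case: eqP; rewrite addr0.
Qed.

Lemma gshift0 (g0 : 'I_m -> R) k : gshift g0 k 0 = g0.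
Proof. by apply/funext => k'; rewrite /gshift; case: eqP; rewrite ?addr0. Qed.

Lemma vshift_derive (v0 : 'I_m -> 'rV[R]_d) k l k' l' :
  is_derive (0:R) 1 (fun s => vshift v0 k l s k' 0 l') ((k' == k)%:R * (l' == l)%:R).
Proof.
rewrite /vshift; case: (eqVneq k' k) => [->|hk].
  rewrite mul1r; case: (eqVneq l' l) => [->|hl].
    have -> : (fun s => (v0 k + \row_j (if j == l then s else 0)) 0 l)
      = (fun s => v0 k 0 l + s) by apply/funext => s; rewrite !mxE eqxx.
    by apply: dD; rewrite add0r.
  have -> : (fun s => (v0 k + \row_j (if j == l then s else 0)) 0 l')
      = (fun s => v0 k 0 l') by apply/funext => s; rewrite !mxE (negbTE hl) addr0.
  by apply: dC.
by rewrite /= mul0r; exact: is_derive_cst.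
Qed.

Lemma gshift_derive (g0 : 'I_m -> R) k k' :
  is_derive (0:R) 1 (fun s => gshift g0 k s k') ((k' == k)%:R).
Proof.
rewrite /gshift; case: (eqVneq k' k) => [->|hk].
  by apply: dD; rewrite add0r.
exact: is_derive_cst.
Qed.

Lemma collapse_v (F : 'I_m -> 'I_d -> R) (G : 'I_m -> R) k l :
  \sum_k' (\sum_l' F k' l' * ((k' == k)%:R * (l' == l)%:R) + G k' * 0) = F k l.
Proof.
rewrite -(sum_delta _ (fun k' => F k' l) k); apply: eq_bigr => k' _.
rewrite mulr0 addr0 -(sum_delta _ (fun l' => F k' l' * (k' == k)%:R) l).
by apply: eq_bigr => l' _; ring.
Qed.

Lemma collapse_g (F : 'I_m -> 'I_d -> R) (G : 'I_m -> R) k :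
  \sum_k' (\sum_l' F k' l' * 0 + G k' * (k' == k)%:R) = G k.
Proof.
rewrite -(sum_delta _ G k); apply: eq_bigr => k' _.
by rewrite big1 ?add0r // => l' _; rewrite mulr0.
Qed.

Lemma dLdv_val (n : nat) (X : 'I_n -> 'rV[R]_d) (y : 'I_n -> R) (c : 'I_m -> R) (v0 : 'I_m -> 'rV[R]_d) g0 k l :
  (forall k, v0 k != 0) -> (forall k, g0 k = norm2 (v0 k)) ->
  (forall j, X j = 0 \/ forall k, dot (v0 k) (X j) != 0) ->
  dLdv X y c v0 g0 k l = \sum_j (net c v0 g0 (X j) - y j) * Dv v0 g0 c k l (X j).
Proof.
move=> hv hg hX.
suff H : is_derive (0:R) 1 (fun s => loss X y c (vshift v0 k l s) g0)
    (\sum_j (net c v0 g0 (X j) - y j) * Dv v0 g0 c k l (X j)).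
  by rewrite /dLdv derive1E; apply: derive_val.
rewrite /loss; apply: dM; rewrite ?mulr0 ?addr0.
  apply: (@dS _ _ (fun j => 2 * (net c v0 g0 (X j) - y j) * Dv v0 g0 c k l (X j))); last by [].
  move=> j; apply: dX2.
    have := net_derive c (fun s => vshift v0 k l s) (fun _ => g0)
      (fun k' l' => (k' == k)%:R * (l' == l)%:R) (fun _ => 0) (X j)
      (fun k' l' => vshift_derive v0 k l k' l') (fun k' => is_derive_cst _ _ _).
    rewrite /= vshift0 => /(_ hv hg (hX j)); rewrite collapse_v => h1.
    exact: (dD _ _ _ _ _ h1 (is_derive_cst (- y j) (0:R) 1) (esym (addr0 _))).
  by rewrite /= vshift0.
rewrite mulr_sumr; apply: eq_bigr => j _; by field.
Qed.

Lemma dLdg_val (n : nat) (X : 'I_n -> 'rV[R]_d) (y : 'I_n -> R) (c : 'I_m -> R) (v0 : 'I_m -> 'rV[R]_d) g0 k :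
  (forall k, v0 k != 0) -> (forall k, g0 k = norm2 (v0 k)) ->
  (forall j, X j = 0 \/ forall k, dot (v0 k) (X j) != 0) ->
  dLdg X y c v0 g0 k = \sum_j (net c v0 g0 (X j) - y j) * Dg v0 c k (X j).
Proof.
move=> hv hg hX.
suff H : is_derive (0:R) 1 (fun s => loss X y c v0 (gshift g0 k s))
    (\sum_j (net c v0 g0 (X j) - y j) * Dg v0 c k (X j)).
  by rewrite /dLdg derive1E; apply: derive_val.
rewrite /loss; apply: dM; rewrite ?mulr0 ?addr0.
  apply: (@dS _ _ (fun j => 2 * (net c v0 g0 (X j) - y j) * Dg v0 c k (X j))); last by [].
  move=> j; apply: dX2.
    have := net_derive c (fun _ => v0) (fun s => gshift g0 k s)
      (fun k' l' => 0) (fun k' => (k' == k)%:R) (X j)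
      (fun k' l' => is_derive_cst _ _ _) (fun k' => gshift_derive g0 k k').
    rewrite /= gshift0 => /(_ hv hg (hX j)); rewrite collapse_g => h1.
    exact: (dD _ _ _ _ _ h1 (is_derive_cst (- y j) (0:R) 1) (esym (addr0 _))).
  by rewrite /= gshift0.
rewrite mulr_sumr; apply: eq_bigr => j _; by field.
Qed.

Lemma key (r ck gk : R) u xi xj : r ^+ 2 = (m%:R)^-1 -> ck ^+ 2 = 1 -> u != 0 ->
  (m%:R)^-1 * ((1 * ck * gk / norm2 u) ^+ 2 * dot (perp u xi) (perp u xj) * ind u xi * ind u xj)
  + (m%:R)^-1 * (relu (dot u xi) * relu (dot u xj) / norm2 u ^+ 2)
  = \sum_l (r * ck * ind u xi * (gk / norm2 u) * perp u xi 0 l) *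
            (r * ck * ind u xj * (gk / norm2 u) * perp u xj 0 l)
    + (r * ck * ind u xi * (dot u xi / norm2 u)) * (r * ck * ind u xj * (dot u xj / norm2 u)).
Proof.
move=> hr c2 hu; have hN := norm2_gt0 _ hu.
rewrite !relu_ind -hr.
rewrite (_ : \sum_l _ = r ^+ 2 * ck ^+ 2 * ind u xi * ind u xj * (gk / norm2 u) ^+ 2 *
   dot (perp u xi) (perp u xj)); last first.
  by rewrite /dot mulr_sumr; apply: eq_bigr => l _; ring.
apply/eqP; rewrite -subr_eq0; apply/eqP.
transitivity ((1 - ck ^+ 2) * (r ^+ 2 * (ind u xi * dot u xi) * (ind u xj * dot u xj) / norm2 u ^+ 2)).
  by field; rewrite gt_eqF.
by rewrite c2 subrr mul0r.
Qed.

Lemma part1 (n : nat) (X : 'I_n -> 'rV[R]_d) (c : 'I_m -> R)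
  (hc : forall k, c k = 1 \/ c k = -1) (alpha : R) (v0 : 'I_m -> 'rV[R]_d) (g0 : 'I_m -> R) :
  0 < alpha -> (forall k, v0 k != 0) -> (forall k, g0 k = norm2 (v0 k) / alpha) ->
  Vmx alpha X c v0 g0 + Gmx X v0 = Hmx X v0.
Proof.
move=> ha hv hg; apply/matrixP => i j; rewrite !mxE -mulrDr -big_split; congr (_ * _).
apply: eq_bigr => k _ /=.
have hN := norm2_gt0 _ (hv k).
have c2 : c k ^+ 2 = 1 by case: (hc k) => ->; rewrite ?sqrrN expr1n.
have e : alpha * c k * g0 k / norm2 (v0 k) = c k.
  by rewrite hg; field; rewrite !gt_eqF.
rewrite e c2 mul1r dot_perp // !relu_ind norm2_sq.
have hD := dot_gt0 _ (hv k).
by field; rewrite gt_eqF.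
Qed.
End S.
Arguments Dv {R d m}.
Arguments Dg {R d m}.

Local Close Scope classical_set_scope.

Theorem proposition3p1 (R : realType) (m n d : nat)
  (X : 'I_n -> 'rV[R]_d) (y : 'I_n -> R) (c : 'I_m -> R)
  (hc : forall k, c k = 1 \/ c k = -1) :
  (forall (alpha : R) (v0 : 'I_m -> 'rV[R]_d) (g0 : 'I_m -> R),
     0 < alpha ->
     (forall k, v0 k != 0) ->
     (forall k, g0 k = norm2 (v0 k) / alpha) ->
     Vmx alpha X c v0 g0 + Gmx X v0 = Hmx X v0)
  /\
  (forall (v : R -> 'I_m -> 'rV[R]_d) (g : R -> 'I_m -> R),
     (forall k, v 0 k != 0) ->
     (forall k, g 0 k = norm2 (v 0 k)) ->
     (forall i k, X i != 0 -> dot (v 0 k) (X i) != 0) ->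
     (forall k l, is_derive (0 : R) (1 : R) (fun t => v t k 0 l)
                    (- dLdv X y c (v 0) (g 0) k l)) ->
     (forall k, is_derive (0 : R) (1 : R) (fun t => g t k)
                    (- dLdg X y c (v 0) (g 0) k)) ->
     forall i : 'I_n,
       is_derive (0 : R) (1 : R) (fun t => net c (v t) (g t) (X i))
         (- \sum_(j < n) Lambda 1 X c (v 0) (g 0) i j
                           * (net c (v 0) (g 0) (X j) - y j))
       /\ Lambda 1 X c (v 0) (g 0) = Hmx X (v 0)).
Proof.
split; first exact: part1.
move=> v g hv hg hX hdv hdg i.
have hX' : forall j, X j = 0 \/ forall k, dot (v 0 k) (X j) != 0.
  by move=> j; case: (eqVneq (X j) 0) => [->|h]; [left|right => k; exact: hX].
have hL1 : Lambda 1 X c (v 0) (g 0) = Vmx 1 X c (v 0) (g 0) + Gmx X (v 0).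
  by rewrite /Lambda expr1n invr1 scale1r.
split; last first.
  by rewrite hL1; apply: part1 => // k; rewrite hg divr1.
have := net_derive _ _ _ c v g _ _ (X i) hdv hdg hv hg (hX' i).
move=> H; apply: (is_derive_eq H).
have hr : (Num.sqrt (m%:R : R))^-1 ^+ 2 = (m%:R)^-1 by rewrite exprVn sqr_sqrtr // ler0n.
set e := fun j => net c (v 0) (g 0) (X j) - y j.
transitivity (- \sum_k \sum_j e j *
   (\sum_l Dv (v 0) (g 0) c k l (X i) * Dv (v 0) (g 0) c k l (X j)
    + Dg (v 0) c k (X i) * Dg (v 0) c k (X j))).
  rewrite -sumrN; apply: eq_bigr => k _.
  rewrite (@dLdg_val _ _ _ _ X y c (v 0) (g 0) k hv hg hX') mulrN mulr_sumr.
  under eq_bigr => l _ do rewrite (@dLdv_val _ _ _ _ X y c (v 0) (g 0) k l hv hg hX') mulrN mulr_sumr.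
  rewrite sumrN -opprD exchange_big -big_split; congr (- _); apply: eq_bigr => j _ /=.
  rewrite mulrDr mulr_sumr; congr (_ + _); last by rewrite /e; ring.
  by apply: eq_bigr => l _; rewrite /e; ring.
rewrite exchange_big; apply: congr1; apply: eq_bigr => j _ /=.
rewrite -mulr_sumr mulrC; congr (_ * _).
rewrite hL1 !mxE mulr_sumr [in X in _ + X]mulr_sumr -big_split; apply: eq_bigr => k _ /=.
have c2 : c k ^+ 2 = 1 by case: (hc k) => ->; rewrite ?sqrrN expr1n.
rewrite /Dv /Dg (key _ _ _ _ _ _ _ _ _ hr c2 (hv k)).
by [].
Qed.
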